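(* Let $\Gamma$ be a finite group, $S\subseteq\Gamma$, $g\ge 3$, and $\Sigma$ an $|S|$-list of elements of $\Gamma$. If there exists an $RSM_\Gamma(S,g;\Sigma)$, then $\mathrm{GOP}(C_g[\Gamma,S];\, g\,\omega(\Sigma))$ has a solution, where $g\,\omega(\Sigma)=[g\,\omega(\sigma)\mid \sigma\in\Sigma]$.
   Context: A list is a multiset. For a list $\Sigma=[\sigma_1,\dots,\sigma_v]$ of elements of a group, $\omega(\Sigma)=[\omega(\sigma_1),\ldots,\omega(\sigma_v)]$ where $\omega(\sigma)$ is the order of $\sigma$. Let $\Gamma$ be a group (written additively, not necessarily abelian), $S\subseteq\Gamma$ and $\Sigma$ an $|S|$-list of elements of $\Gamma$. A row-sum matrix $RSM_\Gamma(S,g;\Sigma)$ is an $|S|\times g$ matrix ($g\ge2$) with entries in $\Gamma$ such that each column is a permutation (arrangement) of $S$ and the multiset of left-to-right row sums $r_1+r_2+\cdots+r_g$ equals $\Sigma$. For $g\ge3$, $C_g[\Gamma,S]$ is the graph with vertex set $\mathbb{Z}_g\times\Gamma$ and edges $\{(i,x),(i+1,d+x)\}$ for $i\in\mathbb{Z}_g$, $x\in\Gamma$, $d\in S$. For a regular graph $G$ and a list $[a_1,\ldots,a_r]$ of integers $\ge 3$, a solution to $\mathrm{GOP}(G;[a_1,\dots,a_r])$ is a partition of the edge set of $G$ into $2$-factors $F_1,\ldots,F_r$, where $F_i$ is a spanning subgraph all of whose components are cycles of length $a_i$. *)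

(* Defs.v *)
(* The group Gamma (additive in the paper) is a finGroupType,
   written multiplicatively: d + x becomes d * x, r_1 + ... + r_g becomes
   r_1 * ... * r_g (left to right). *)
From mathcomp Require Import all_boot all_order all_fingroup.
Set Implicit Arguments. Unset Strict Implicit. Unset Printing Implicit Defensive.
Local Open Scope group_scope.

Section Defs.
Variable gT : finGroupType.

Definition is_RSM (S : {set gT}) (g : nat) (Sigma : seq gT)
    (M : 'I_#|S| -> 'I_g -> gT) : Prop :=
  (forall j : 'I_g, perm_eq [seq M i j | i <- enum 'I_#|S|] (enum S)) /\
  perm_eq [seq (\prod_(j < g) M i j)%g | i <- enum 'I_#|S|] Sigma.

Arguments is_RSM : clear implicits.

Definition has_RSM (S : {set gT}) (g : nat) (Sigma : seq gT) : Prop :=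
  exists M : 'I_#|S| -> 'I_g -> gT, @is_RSM S g Sigma M.

Definition Cg_vertex (g : nat) := ('I_g * gT)%type.

Definition Cg_adj (g : nat) (S : {set gT}) (u v : Cg_vertex g) : bool :=
  ((nat_of_ord v.1 == (u.1.+1 %% g)%N) && (v.2 * u.2^-1 \in S)) ||
  ((nat_of_ord u.1 == (v.1.+1 %% g)%N) && (u.2 * v.2^-1 \in S)).

Definition Cg_edges (g : nat) (S : {set gT}) : {set {set Cg_vertex g}} :=
  [set e : {set Cg_vertex g} |
     [exists u : Cg_vertex g, exists v : Cg_vertex g, Cg_adj S u v && (e == [set u; v])]].

End Defs.

Section Factors.
Variable V : finType.

Definition cycle_edges (c : seq V) : {set {set V}} :=
  [set [set p.1; p.2] | p in zip c (rot 1 c)].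

Definition is_a_factor (E : {set {set V}}) (a : nat) (F : {set {set V}}) : Prop :=
  F \subset E /\
  exists cs : seq (seq V),
    [/\ all (fun c => uniq c && (size c == a)) cs,
        uniq (flatten cs),
        (forall v : V, v \in flatten cs) &
        F = \bigcup_(c <- cs) cycle_edges c].

Definition GOP_solution (E : {set {set V}}) (a : seq nat) : Prop :=
  exists F : 'I_(size a) -> {set {set V}},
    [/\ forall k : 'I_(size a), is_a_factor E (nth 0%N a k) (F k),
        (forall k l : 'I_(size a), k != l -> [disjoint F k & F l]) &
        \bigcup_(k < size a) F k = E].

End Factors.

(* Main.v *)
Require Import Defs.
From mathcomp Require Import all_boot all_order all_fingroup cyclic zify.
Set Implicit Arguments. Unset Strict Implicit. Unset Printing Implicit Defensive.
Local Open Scope group_scope.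

Section Row.
Variable gT : finGroupType.
Variable n : nat.
Variable N : 'I_n.+1 -> gT.

Definition lv k : 'I_n.+1 := inord (k %% n.+1).
Fixpoint P k := if k is k'.+1 then N (lv k') * P k' else 1.
Definition sg := P n.+1.
Definition w (x : gT) k : 'I_n.+1 * gT := (lv k, P k * x).
Definition nxt (r : 'I_n.+1) := lv r.+1.
Definition edge_of (r : 'I_n.+1) y : {set 'I_n.+1 * gT} := [set (r, y); (nxt r, N r * y)].
Definition Fset := [set edge_of p.1 p.2 | p : 'I_n.+1 * gT].
Definition K := (n.+1 * #[sg])%N.
Definition cyc x := map (w x) (iota 0 K).
Definition Cs := enum (rcosets <[sg]> [set: gT]).
Definition cs := [seq cyc (repr C) | C <- Cs].

Lemma lv_val k : nat_of_ord (lv k) = (k %% n.+1)%N.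
Proof. by rewrite /lv inordK // ltn_mod. Qed.

Lemma lv_ord (r : 'I_n.+1) : lv r = r.
Proof. by apply: val_inj => /=; rewrite lv_val modn_small. Qed.

Lemma lv_mod k : lv (k %% n.+1) = lv k.
Proof. by apply: val_inj => /=; rewrite !lv_val modn_mod. Qed.

Lemma lvD k : lv (k + n.+1) = lv k.
Proof. by apply: val_inj => /=; rewrite !lv_val modnDr. Qed.

Lemma nxt_lv k : nxt (lv k) = lv k.+1.
Proof. apply: val_inj => /=; rewrite /nxt !lv_val. by rewrite -addn1 modnDml addn1. Qed.

Lemma PD k : P (k + n.+1) = P k * sg.
Proof.
elim: k => [|k IH]; first by rewrite mul1g.
by rewrite addSn /= IH lvD mulgA.
Qed.

Lemma PDM k q : P (k + q * n.+1) = P k * sg ^+ q.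
Proof.
elim: q => [|q IH]; first by rewrite addn0 mulg1.
by rewrite mulSnr addnA PD IH -mulgA -expgSr.
Qed.

Lemma Pdiv k : P k = P (k %% n.+1) * sg ^+ (k %/ n.+1).
Proof. by rewrite -PDM addnC -divn_eq. Qed.

Lemma w_mod x : w x K = w x 0.
Proof.
rewrite /w /K mulnC -[X in lv X]add0n -[X in P X]add0n PDM expg_order mulg1.
by congr (_, _); apply: val_inj => /=; rewrite !lv_val modnMl mod0n.
Qed.

Lemma edge_w x k : [set w x k; w x k.+1] = edge_of (lv k) (P k * x).
Proof. by rewrite /edge_of /w nxt_lv /= mulgA. Qed.


Local Notation H := <[sg]>.

Lemma Cs_repr C : C \in Cs -> C = H :* repr C.
Proof.
rewrite mem_enum => /rcosetsP[a _ ->].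
by apply/esym/rcoset_eqP; apply: mem_repr_rcoset.
Qed.

Lemma divK k : (k < K)%N -> (k %/ n.+1 < #[sg])%N.
Proof. by move=> kK; rewrite ltn_divLR // mulnC. Qed.

Lemma w_inj C C' k k' : C \in Cs -> C' \in Cs -> (k < K)%N -> (k' < K)%N ->
  w (repr C) k = w (repr C') k' -> C = C' /\ k = k'.
Proof.
move=> hC hC' hk hk' [] /(congr1 (@nat_of_ord _)); rewrite !lv_val => er.
rewrite Pdiv [P k']Pdiv er -!mulgA => /mulgI eq2.
have xin : repr C \in H :* repr C'.
  apply/rcosetP; exists ((sg ^+ (k %/ n.+1))^-1 * sg ^+ (k' %/ n.+1)).
    by rewrite groupM ?groupV ?mem_cycle.
  by rewrite -mulgA -eq2 mulKg.
have eC : C = C'.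
  by rewrite (Cs_repr hC) (Cs_repr hC'); apply/rcoset_eqP.
subst C'; split=> //.
move/mulIg: eq2 => /eqP; rewrite eq_expg_mod_order !modn_small ?divK // => /eqP eq.
by rewrite (divn_eq k n.+1) (divn_eq k' n.+1) eq er.
Qed.

Lemma cover r y : exists C k, [/\ C \in Cs, (k < K)%N & w (repr C) k = (r, y)].
Proof.
set z := (P r)^-1 * y.
have hC : H :* z \in Cs by rewrite mem_enum; apply/rcosetsP; exists z.
exists (H :* z).
have : z \in H :* repr (H :* z) by rewrite -(Cs_repr hC) rcoset_refl.
case/rcosetP=> a /cyclePmin[j jlt ->] ez.
exists (j * n.+1 + r)%N; split=> //.
  rewrite /K [X in _ < X]mulnC; apply: (@leq_trans (j.+1 * n.+1)).
    by rewrite [X in _ < X]mulSnr ltn_add2l.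
  by rewrite leq_mul2r jlt orbT.
rewrite /w; congr (_, _).
  by apply: val_inj => /=; rewrite lv_val modnMDl modn_small.
by rewrite addnC PDM -mulgA -ez /z mulKVg.
Qed.


Lemma K_gt0 : (0 < K)%N.
Proof. by rewrite /K muln_gt0 order_gt0. Qed.

Lemma flat_cs : flatten cs = [seq w (repr C) k | C <- Cs, k <- iota 0 K].
Proof. by []. Qed.

Lemma cs_uniq : uniq (flatten cs).
Proof.
rewrite flat_cs; apply: allpairs_uniq; rewrite ?enum_uniq ?iota_uniq //.
move=> [C k] [C' k'] /allpairsP[[C1 k1] [/= h1 h2 [-> ->]]].
move=> /allpairsP[[C2 k2] [/= h3 h4 [-> ->]]] /= e.
rewrite mem_iota add0n in h2; rewrite mem_iota add0n in h4.
by case: (w_inj h1 h3 h2 h4 e) => -> ->.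
Qed.

Lemma cs_all : all (fun c => uniq c && (size c == K)) cs.
Proof.
apply/allP=> c /mapP[C hC ->]; rewrite /cyc size_map size_iota eqxx andbT.
rewrite map_inj_in_uniq ?iota_uniq // => k k'.
rewrite !mem_iota !add0n => hk hk' e.
by case: (w_inj hC hC hk hk' e).
Qed.

Lemma cs_cover v : v \in flatten cs.
Proof.
case: v => r y; case: (cover r y) => C [k [hC hk <-]].
by rewrite flat_cs; apply: allpairs_f; rewrite // mem_iota add0n.
Qed.

Lemma zip_map2 (A : Type) (f g : nat -> A) (s : seq nat) :
  zip (map f s) (map g s) = map (fun k => (f k, g k)) s.
Proof. by elim: s => //= a s ->. Qed.

Lemma cyc_zip x : zip (cyc x) (rot 1 (cyc x)) = map (fun k => (w x k, w x k.+1)) (iota 0 K).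
Proof.
have : rot 1 (cyc x) = map (fun k => w x k.+1) (iota 0 K).
  rewrite /cyc; case: K K_gt0 (w_mod x) => // K' _ wK.
  have -> : map (fun k => w x k.+1) (iota 0 K'.+1) = map (w x) (iota 1 K'.+1).
    by rewrite -[1%N]addn0 iotaDl -map_comp.
  rewrite -map_rot [iota 0 _]/= rot1_cons map_rcons.
  by rewrite -[K'.+1]addn1 iotaD map_cat /= -wK add1n cats1.
by move=> ->; rewrite /cyc zip_map2.
Qed.

Lemma Fset_eq : Fset = \bigcup_(c <- cs) cycle_edges c.
Proof.
apply/setP=> e; rewrite big_map bigcup_seq; apply/imsetP/bigcupP.
  case=> [[r y]] _ ->; case: (cover r y) => C [k [hC hk e1]].
  exists C => //.
  rewrite /cycle_edges cyc_zip; apply/imsetP.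
  exists (w (repr C) k, w (repr C) k.+1); first by apply/mapP; exists k; rewrite // mem_iota.
  rewrite /= edge_w; case: e1 => <- <-; done.
case=> C hC; rewrite /cycle_edges cyc_zip => /imsetP[p /mapP[k _ ->] ->].
by exists (lv k, P k * repr C) => //; rewrite /= edge_w.
Qed.

End Row.

Lemma P_rev (gT : finGroupType) n (Mr : 'I_n.+1 -> gT) k : (k <= n.+1)%N ->
  P (fun r => Mr (rev_ord r)) k = \prod_(n.+1 - k <= j < n.+1) Mr (inord j).
Proof.
elim: k => [|k IH] hk; first by rewrite subn0 big_geq.
rewrite /= IH ?(ltnW hk) // (big_ltn (m := (n.+1 - k.+1)%N)); last first.
  lia.
rewrite subnSK; last by lia. congr (Mr _ * _).
apply: val_inj => /=; rewrite inordK ?lv_val ?modn_small //.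
lia.
Qed.

Lemma sg_rev (gT : finGroupType) n (Mr : 'I_n.+1 -> gT) :
  sg (fun r => Mr (rev_ord r)) = \prod_(j < n.+1) Mr j.
Proof.
rewrite /sg P_rev // subnn big_mkord; apply: eq_bigr => j _; by rewrite inord_val.
Qed.

Lemma set2_eq (T : finType) (a b c d : T) : a != b -> [set a; b] = [set c; d] ->
  (a = c /\ b = d) \/ (a = d /\ b = c).
Proof.
move=> ab e.
have : a \in [set c; d] by rewrite -e set21.
have : b \in [set c; d] by rewrite -e set22.
move=> /set2P[] eb /set2P[] ea; subst; try by rewrite eqxx in ab. all: auto.
Qed.

Lemma no2cycle L r r' : (2 < L)%N -> (r < L)%N -> (r' < L)%N ->
  r = (r'.+1 %% L)%N -> r' = (r.+1 %% L)%N -> False.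
Proof.
move=> hL hr hr' e1 e2; case: (ltnP r'.+1 L) => h1.
  rewrite modn_small // in e1; subst r.
  case: (ltnP r'.+2 L) => h2; first by rewrite modn_small // in e2; lia.
  have eL : L = r'.+2 by lia.
  by rewrite eL modnn in e2; lia.
have eL : L = r'.+1 by lia.
rewrite eL modnn in e1; subst r.
rewrite modn_small in e2; lia.
Qed.

Theorem mainTheorem4 (gT : finGroupType) (S : {set gT}) (g : nat) (Sigma : seq gT) :
  (3 <= g)%N ->
  size Sigma = #|S| ->
  has_RSM S g Sigma ->
  GOP_solution (Cg_edges g S) [seq (g * #[sigma]%g)%N | sigma <- Sigma].
Proof.
move=> hg hsz [M [hcol hrow]].
case: g hg M hcol hrow => [|n] // hg M hcol hrow.
set a := [seq _ | sigma <- Sigma].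
have sa : size a = #|S| by rewrite size_map.
pose rp i := \prod_(j < n.+1) M i j.
have : perm_eq Sigma [tuple rp i | i < #|S|] by rewrite perm_sym.
case/tuple_permP => p hSig.
pose rho (k : 'I_(size a)) : 'I_#|S| := p (cast_ord sa k).
pose Nr (i : 'I_#|S|) := fun r : 'I_n.+1 => M i (rev_ord r).
have colS : forall i j, M i j \in S.
  by move=> i j; rewrite -mem_enum -(perm_mem (hcol j)); apply: map_f; rewrite mem_enum.
have colI : forall j i i', M i j = M i' j -> i = i'.
  move=> j; apply/injectiveP; rewrite /injectiveb /dinjectiveb.
  by rewrite (perm_uniq (hcol j)) enum_uniq.
have edgeE : forall i r y, edge_of (Nr i) r y \in Cg_edges n.+1 S.
  move=> i r y; rewrite inE; apply/existsP; exists (r, y); apply/existsP.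
  exists (nxt r, Nr i r * y); rewrite eqxx andbT /Cg_adj /= /nxt lv_val eqxx mulgK.
  by rewrite colS.
have hnth : forall k : 'I_(size a), nth 1 Sigma k = rp (rho k).
  move=> k; rewrite hSig /= (nth_map (cast_ord sa k)); last by rewrite size_enum_ord -sa.
  by rewrite -[nat_of_ord k]/(nat_of_ord (cast_ord sa k)) nth_ord_enum tnth_mktuple.
have hnth_a : forall k : 'I_(size a), nth 0%N a k = (n.+1 * #[rp (rho k)])%N.
  by move=> k; rewrite (nth_map 1) -?hnth // -(size_map (fun s => (n.+1 * #[s])%N)).
have sgN : forall i, sg (Nr i) = rp i by move=> i; rewrite /Nr sg_rev.
exists (fun k => Fset (Nr (rho k))); split.
- move=> k; split.
    by apply/subsetP=> e /imsetP[[r y] _ ->]; apply: edgeE.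
  exists (cs (Nr (rho k))); split.
  + by rewrite hnth_a -sgN; apply: cs_all.
  + exact: cs_uniq.
  + exact: cs_cover.
  + exact: Fset_eq.
- move=> k l kl.
  have ril : rho k != rho l.
    apply: contra kl => /eqP /perm_inj /(congr1 (@nat_of_ord _)) /= e.
    by apply/eqP/val_inj.
  rewrite -setI_eq0; apply/eqP/setP => e; rewrite !inE.
  apply/negP => /andP[/imsetP[[r y] _ ->] /imsetP[[r' y'] _ e2]].
  have nr : forall r0 : 'I_n.+1, (r0, y) != (nxt r0, Nr (rho k) r0 * y).
    move=> r0; apply/negP => /eqP [] /(congr1 (@nat_of_ord _)); rewrite /nxt lv_val => e0 _.
    exact: (no2cycle hg (ltn_ord r0) (ltn_ord r0) e0 e0).
  case: (set2_eq (nr r) e2) => /= [[[e3 e4] [_ e5]] | [[e3 _] [e4 _]]].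
  + subst r' y'; move/mulIg: e5; rewrite /Nr => /colI eik.
    by rewrite eik eqxx in ril.
  + apply: (no2cycle hg (ltn_ord r) (ltn_ord r')).
      by rewrite e3 /nxt lv_val.
    by rewrite -e4 /nxt lv_val.
- have surj : forall i, exists k, rho k = i.
    move=> i; exists (cast_ord (esym sa) (p^-1 i)).
    by rewrite /rho cast_ordKV permKV.
  have key : forall (u v : 'I_n.+1 * gT), nat_of_ord v.1 = (u.1.+1 %% n.+1)%N ->
      v.2 * u.2^-1 \in S -> [set u; v] \in \bigcup_(k < size a) Fset (Nr (rho k)).
    move=> [r y] [r' y'] /= e1 dS.
    have : y' * y^-1 \in [seq M i (rev_ord r) | i <- enum 'I_#|S|].
      by rewrite (perm_mem (hcol _)) mem_enum.
    case/mapP=> i _ ei; case: (surj i) => k rk.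
    apply/bigcupP; exists k => //; rewrite rk; apply/imsetP; exists (r, y) => //=.
    rewrite /edge_of /Nr -ei mulgKV; congr [set _; (_, _)].
    by apply: val_inj; rewrite /= /nxt lv_val.
  apply/setP => e; apply/bigcupP/idP.
    by case=> k _ /imsetP[[r y] _ ->]; apply: edgeE.
  rewrite inE => /existsP[u /existsP[v /andP[adj /eqP ->]]]; apply/bigcupP.
  case/orP: adj => /andP[/eqP e1 e2]; first exact: key.
  by rewrite setUC; apply: key.
Qed.
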